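(* Let $\mathcal{A}\subset\mathbb{C}$ be a finite transmit alphabet, let $M_t,M_r\ge 1$, $\nu\ge 0$, $T>\nu$ be integers, and let $q\in\{1,\dots,M_t\}$. Let $\mathcal{C}$ be a code whose codewords are complex matrices $\mathbf{X}^{(1)}=[\mathbf{x}[0],\dots,\mathbf{x}[T-\nu-1],\mathbf{0},\dots,\mathbf{0}]\in\mathbb{C}^{M_t\times T}$ with $\mathbf{x}[n]\in\mathcal{A}^{M_t}$ for $0\le n\le T-\nu-1$ and last $\nu$ columns equal to zero. Suppose the diversity order of $\mathcal{C}$ over the $(\nu+1)$-tap ISI channel with $M_r$ receive antennas is $q(\nu+1)M_r$, i.e. $M_r\min_{\mathbf{X}_1^{(1)}\neq\mathbf{X}_2^{(1)}\in\mathcal{C}}\operatorname{rank}_{\mathbb{C}}\big(\Theta(\mathbf{X}_1^{(1)})-\Theta(\mathbf{X}_2^{(1)})\big)=q(\nu+1)M_r$. Then the rate $R=\frac{1}{T}\log_{|\mathcal{A}|}|\mathcal{C}|$ (in symbols per transmission) satisfies $R\le M_t-q+1$.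
   Context: For a matrix $\mathbf{X}^{(1)}=[\mathbf{x}[0],\dots,\mathbf{x}[T-\nu-1],\mathbf{0},\dots,\mathbf{0}]\in\mathbb{C}^{M_t\times T}$ (last $\nu$ columns zero), $\Theta(\mathbf{X}^{(1)})\in\mathbb{C}^{(\nu+1)M_t\times T}$ is the block-Toeplitz matrix with $\nu+1$ block rows, where block row $i$ ($i=0,\dots,\nu$) is $\mathbf{X}^{(1)}$ with its columns shifted right by $i$ positions (i.e. block row $i$ equals $[\mathbf{0},\dots,\mathbf{0},\mathbf{x}[0],\dots,\mathbf{x}[T-\nu-1],\mathbf{0},\dots,\mathbf{0}]$ with $i$ leading zero columns and $\nu-i$ trailing zero columns). This is the equivalent codeword seen through the channel $\mathbf{Y}=[\mathbf{H}_0,\dots,\mathbf{H}_\nu]\Theta(\mathbf{X}^{(1)})+\mathbf{Z}$, and the diversity order of a code is $M_r$ times the minimum rank of differences of these equivalent codewords. *)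

(* Defs.v *)
From HB Require Import structures.
From mathcomp Require Import all_boot all_order all_algebra.
From mathcomp Require Import complex.
From mathcomp Require Import all_classical all_reals exp.
Set Implicit Arguments. Unset Strict Implicit. Unset Printing Implicit Defensive.
Import Order.TTheory GRing.Theory Num.Theory.
Local Open Scope ring_scope.
Local Open Scope complex_scope.

Definition shiftr_cols (F : pzRingType) (m T : nat) (i : nat) (X : 'M[F]_(m, T))
  : 'M[F]_(m, T) :=
  \matrix_(r < m, j < T) if (i <= j)%N then X r (insubd j (j - i)%N) else 0.

Definition Theta (F : pzRingType) (m T nu : nat) (X : 'M[F]_(m, T)) :=
  \mxcol_(i < nu.+1) shiftr_cols i X.
Arguments Theta {F m T} nu X.

Definition isi_codeword (F : pzRingType) (A : seq F) (m T nu : nat)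
  (X : 'M[F]_(m, T)) : Prop :=
  forall (r : 'I_m) (j : 'I_T),
    ((j < T - nu)%N -> X r j \in A) /\ ((T - nu <= j)%N -> X r j = 0).
Arguments isi_codeword {F} A {m T} nu X.

Definition is_min_rank_diff (F : fieldType) (m T nu : nat)
  (code : seq 'M[F]_(m, T)) (d : nat) : Prop :=
  (exists X1, exists X2, [/\ X1 \in code, X2 \in code, X1 != X2 &
       \rank (Theta nu X1 - Theta nu X2)%R = d]) /\
  (forall X1 X2, X1 \in code -> X2 \in code -> X1 != X2 ->
       (d <= \rank (Theta nu X1 - Theta nu X2)%R)%N).
Arguments is_min_rank_diff {F m T} nu code d.

Definition code_rate (R : realType) (Asize Csize T : nat) : R :=
  (ln (Csize%:R : R) / ln (Asize%:R : R)) / T%:R.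

(* Main.v *)
Require Import Defs.
From HB Require Import structures.
From mathcomp Require Import all_boot all_order all_algebra.
From mathcomp Require Import complex.
From mathcomp Require Import all_classical all_reals exp.
From mathcomp Require Import zify.
Import Order.TTheory GRing.Theory Num.Theory.
Local Open Scope ring_scope.
Local Open Scope complex_scope.

Lemma rank_top0 (F : fieldType) k l n (M : 'M[F]_(k + l, n)) :
  (forall (r : 'I_k) j, M (lshift l r) j = 0) -> (\rank M <= l)%N.
Proof.
move=> H; rewrite -(vsubmxK M).
have -> : usubmx M = 0 by apply/matrixP => i j; rewrite !mxE H.
by rewrite rank_col_0mx rank_leq_row.
Qed.

Lemma rank_mxcol_le (F : fieldType) p (p_ : 'I_p -> nat) m
   (V_ : forall i, 'M[F]_(p_ i, m)) b :
  (forall i, \rank (V_ i) <= b)%N -> (\rank (\mxcol_i V_ i) <= p * b)%N.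
Proof.
move=> H; rewrite (eqmx_col V_).
have -> : (p * b = \sum_(i < p) b)%N by rewrite sum_nat_const card_ord.
apply: (big_ind2 (fun (S : 'M[F]_m) (s : nat) => \rank S <= s)%N).
- by rewrite mxrank0.
- move=> S1 s1 S2 s2 h1 h2; apply: leq_trans (mxrank_adds_leqif S1 S2) _.
  exact: leq_add.
- by move=> i _; rewrite genmxE.
Qed.

Lemma count_bound (F : fieldType) (A : seq F) k l T nu
  (code : seq 'M[F]_(k + l, T)) a :
  size A = a.+1 -> uniq code -> (forall X, X \in code -> isi_codeword A nu X) ->
  (forall X1 X2, X1 \in code -> X2 \in code ->
     (forall r j, X1 (lshift l r) j = X2 (lshift l r) j) -> X1 = X2) ->
  (size code <= a.+1 ^ (k * (T - nu)))%N.
Proof.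
move=> sA ucode hcw Hsep.
have hn : (T - nu <= T)%N by apply: leq_subr.
pose g (X : 'M[F]_(k + l, T)) : {ffun 'I_k * 'I_(T - nu) -> 'I_a.+1} :=
  [ffun p => inord (index (X (lshift l p.1) (widen_ord hn p.2)) A)].
have inj : {in code &, injective g}.
  move=> X1 X2 i1 i2 /ffunP hg; apply: Hsep => // r j.
  case: (ltnP j (T - nu)) => hj.
  - have := hg (r, Ordinal hj); rewrite !ffunE /=.
    have wj : widen_ord hn (Ordinal hj) = j by apply: val_inj.
    rewrite wj => /(congr1 val).
    have m1 := (hcw X1 i1 (lshift l r) j).1 hj.
    have m2 := (hcw X2 i2 (lshift l r) j).1 hj.
    rewrite /= !inordK -?sA ?index_mem // => e.
    by rewrite -(nth_index 0 m1) e (nth_index 0 m2).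
  - by rewrite (hcw X1 i1 _ _).2 // (hcw X2 i2 _ _).2.
have u : uniq (map g code) by rewrite map_inj_in_uniq.
rewrite -(size_map g) -(card_uniqP u).
apply: leq_trans (max_card _) _.
by rewrite card_ffun card_prod !card_ord.
Qed.

Theorem lemma1 (R : realType) (A : seq R[i]) (Mt Mr nu T q : nat)
  (code : seq 'M[R[i]]_(Mt, T)) :
  uniq A -> (1 <= Mt)%N -> (1 <= Mr)%N -> (nu < T)%N ->
  (1 <= q)%N -> (q <= Mt)%N ->
  uniq code ->
  (forall X, X \in code -> isi_codeword A nu X) ->
  (exists d, is_min_rank_diff nu code d /\ (Mr * d = q * nu.+1 * Mr)%N) ->
  code_rate R (size A) (size code) T <= (Mt - q + 1)%:R.
Proof.
move=> uA hMt hMr hT hq1 hqM ucode hcw [d [[[X1 [X2 [in1 in2 neq _]]] hmin] E]].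
have hd : d = (q * nu.+1)%N.
  apply/eqP; by rewrite -(eqn_pmul2l hMr) E mulnC.
have [k [l [eMt [ek el]]]] : exists k l, Mt = (k + l)%N /\ k = (Mt - q + 1)%N /\ l = (q - 1)%N.
  by exists (Mt - q + 1)%N, (q - 1)%N; split; [lia | split].
subst Mt. rewrite -ek.
have Cpos : (0 < size code)%N by move: in1; case: (code).
have Hsep : forall Y1 Y2, Y1 \in code -> Y2 \in code ->
     (forall r j, Y1 (lshift l r) j = Y2 (lshift l r) j) -> Y1 = Y2.
  move=> Y1 Y2 i1 i2 hag; apply/eqP; apply/negPn/negP => hne.
  have := hmin Y1 Y2 i1 i2 hne.
  rewrite /Theta -mxcolB => hle.
  have h2 : (d <= nu.+1 * l)%N.
    apply: (leq_trans hle); apply: rank_mxcol_le => i; apply: rank_top0 => r j.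
    by rewrite !mxE; case: ifP => _; rewrite ?hag subrr.
  move: h2; rewrite hd el; lia.
rewrite /code_rate.
case: (leqP (size A) 1) => hA.
  have -> : ln ((size A)%:R : R) = 0.
    move: hA; case: (size A) => [|[|]] // _; first by rewrite ln0.
    by rewrite ln1.
  by rewrite invr0 mulr0 mul0r ler0n.
have [a sA] : exists a, size A = a.+1 by exists (size A).-1; lia.
have hc := @count_bound _ A k l T nu code a sA ucode hcw Hsep.
set n := (T - nu)%N in hc.
have Apos : (0 : R) < ln ((size A)%:R) by apply: ln_gt0; rewrite ltr1n.
have Tpos : (0 : R) < T%:R by rewrite ltr0n; lia.
rewrite ler_pdivrMr // ler_pdivrMr //.
apply: (@le_trans _ _ (ln (((size A)%:R : R) ^+ (k * n)))).
  rewrite ler_ln ?posrE ?ltr0n ?exprn_gt0 ?ltr0n //; last by lia.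
  by rewrite -natrX ler_nat sA.
rewrite lnXn ?ltr0n; last by lia.
rewrite -[ln _ *+ _]mulr_natl.
apply: ler_wpM2r; first exact: ltW Apos.
by rewrite -natrM ler_nat leq_mul // /n leq_subr.
Qed.
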